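(* Let $w\in\{a,b\}^*$, $|w|=n>1$, be conjugate to a Christoffel word, and let $p=|w|_a$ (so $\gcd(p,n)=1$). Fix $1\le k\le m<n$ and an ordered partition $P_k=(p_1,\dots,p_k)$ of $m$. Let $s_0=0$, $s_\ell=p_1+\dots+p_\ell$ for $1\le\ell\le k$, and let $i_\ell$ be the least nonnegative residue of $s_\ell p$ modulo $n$. These $k+1$ residues are distinct; list them in increasing order as $0=r_0<r_1<\dots<r_k$, set $r_{k+1}=n$, and let $\pi_\ell=r_{\ell+1}-r_\ell$ for $0\le\ell\le k$, so that $\Pi=(\pi_0,\dots,\pi_k)$ is an ordered partition of $n$ into $k+1$ parts. Order the $k+1$ varieties of $\mathcal{F}_{(m,k)}$ as $\lambda_0,\dots,\lambda_k$ according to the lexicographic order of their elements (the lexicographically least element of $\lambda_{\ell}$ precedes that of $\lambda_{\ell+1}$). Then the multiplicity of $\lambda_\ell$ is $\pi_\ell$ for each $0\le\ell\le k$. (For example, for $w=aaabaab$ and $P_3=(1,2,1)$, $\Pi=(1,4,1,1)$.)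
   Context: Alphabet $\{a<b\}$ with lexicographic order. $|u|_x$ denotes the number of occurrences of the letter $x$ in $u$. For $|w|=n$ and $1\le m<n$, the multiset $\mathcal{F}_m$ of circular factors of length $m$ of $w$ is the multiset of the length-$m$ prefixes of the $n$ rotations of $w$ (equivalently, the $n$ factors of length $m$ of the prefix of length $n+m-1$ of $ww$, counted with starting positions). Given an ordered partition $P_k=(p_1,\dots,p_k)$ of $m$ (positive integers summing to $m$), $\mathcal{F}_{(m,k)}$ is the multiset of the $u\in\mathcal{F}_m$ written as $u=u_1\cdots u_k$ with $|u_i|=p_i$. The height profile of $u$ is $\langle |u_1|_b,\dots,|u_k|_b\rangle$; partitioned factors of equal height profile are of the same variety; the multiplicity of a variety is the number of elements of the multiset $\mathcal{F}_{(m,k)}$ in it. A lower Christoffel word of slope $q/p$ with $p,q\ge1$, $\gcd(p,q)=1$, $n=p+q$, is $w_0\cdots w_{n-1}$ where $w_i=a$ if $((i+1)q\bmod n)>(iq\bmod n)$ and $w_i=b$ otherwise; a Christoffel word (of length $>1$) is a lower Christoffel word or its reversal; conjugate means rotation. It is known (Theorem card) that $\mathcal{F}_{(m,k)}$ has exactly $k+1$ varieties, each forming a block of lexicographically consecutive elements. *)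

(* Defs.v *)
(* Words over {a < b} are encoded as seq bool with
   a := false and b := true. *)
From mathcomp Require Import all_boot.
Set Implicit Arguments. Unset Strict Implicit. Unset Printing Implicit Defensive.

Definition word := seq bool.

Definition cnt_b (u : word) : nat := count id u.
Definition cnt_a (u : word) : nat := count negb u.

Fixpoint lexle (u v : word) : bool :=
  match u, v with
  | [::], _ => true
  | _ :: _, [::] => false
  | x :: u', y :: v' => if x == y then lexle u' v' else (~~ x) && y
  end.

Definition lower_christoffel (p q : nat) : word :=
  let n := p + q in
  mkseq (fun i => ~~ ((i * q) %% n < (i.+1 * q) %% n)) n.

Definition christoffel (w : word) : Prop :=
  exists p q, [/\ 0 < p, 0 < q, coprime p q &
     (w = lower_christoffel p q \/ w = rev (lower_christoffel p q))].

Definition conjugate (u v : word) : Prop := exists r, u = rot r v.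

(* multiset (list, with multiplicity) of circular factors of length m:
   length-m prefixes of the n rotations of w *)
Definition circ_factors (w : word) (m : nat) : seq word :=
  [seq take m (rot i w) | i <- iota 0 (size w)].

Definition ordered_partition (P : seq nat) (m k : nat) : bool :=
  [&& size P == k, all (fun x => 0 < x) P & sumn P == m].

Definition height_profile (P : seq nat) (u : word) : seq nat :=
  [seq cnt_b x | x <- reshape P u].

(* F_(m,k) is circ_factors w m, each element cut according to P *)
(* the varieties (distinct height profiles occurring) *)
Definition varieties (w : word) (P : seq nat) : seq (seq nat) :=
  undup [seq height_profile P u | u <- circ_factors w (sumn P)].

Definition variety_elems (w : word) (P : seq nat) (h : seq nat) : seq word :=
  [seq u <- circ_factors w (sumn P) | height_profile P u == h].

Definition multiplicity (w : word) (P : seq nat) (h : seq nat) : nat :=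
  size (variety_elems w P h).

Definition least_elem (w : word) (P : seq nat) (h : seq nat) : word :=
  head [::] (sort lexle (variety_elems w P h)).

Definition ordered_varieties (w : word) (P : seq nat) : seq (seq nat) :=
  sort (fun h1 h2 => lexle (least_elem w P h1) (least_elem w P h2))
       (varieties w P).

Definition residues (P : seq nat) (p n : nat) : seq nat :=
  [seq (sumn (take l P) * p) %% n | l <- iota 0 (size P).+1].

Definition Pi_partition (P : seq nat) (p n : nat) : seq nat :=
  let r := rcons (sort leq (residues P p n)) n in
  [seq nth 0 r l.+1 - nth 0 r l | l <- iota 0 (size P).+1].

(* Main.v *)
Require Import Defs.
From mathcomp Require Import all_boot zify.
Set Implicit Arguments. Unset Strict Implicit. Unset Printing Implicit Defensive.

Lemma div_small2 x n : 0 < n -> x < n + n -> x %/ n = (n <= x).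
Proof.
move=> n0 xl; case: (leqP n x) => h.
  have -> : x = n + (x - n) by lia.
  rewrite divnDl ?dvdnn // divnn n0 divn_small //; lia.
by rewrite divn_small.
Qed.

Lemma divstep n p q a : p + q = n -> 0 < p -> (a + q) %/ n = a %/ n + (p <= a %% n).
Proof.
move=> e p0; have n0 : 0 < n by lia.
have := ltn_pmod a n0 => h.
have h2 : a %% n + q < n + n by lia.
rewrite {1}(divn_eq a n) -addnA divnMDl // (@div_small2 (a %% n + q)) //.
have -> : (n <= a %% n + q) = (p <= a %% n) by apply/idP/idP; lia.
by [].
Qed.

Definition mech (n q p y j : nat) : bool := p <= (y + j * q) %% n.

Lemma count_mech n q p y o L : p + q = n -> 0 < p ->
  count id (mkseq (fun j => mech n q p y (o + j)) L) =
  (y + (o + L) * q) %/ n - (y + o * q) %/ n.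
Proof.
move=> e p0; elim: L => [|L IH]; first by rewrite addn0 subnn.
rewrite mkseqS -cats1 count_cat IH /= addn0.
have -> : y + (o + L.+1) * q = (y + (o + L) * q) + q by rewrite addnS mulSn; lia.
rewrite (divstep _ e p0) /mech.
have : (y + o * q) %/ n <= (y + (o+L) * q) %/ n.
  apply: leq_div2r; rewrite mulnDl; lia.
lia.
Qed.

Lemma mod_cancel x n a b : coprime x n -> a < n -> b < n ->
  (a * x) %% n = (b * x) %% n -> a = b.
Proof.
move=> cx an bn.
wlog ab : a b an bn / a <= b.
  move=> H; case: (leqP a b) => h; first exact: H.
  move=> e; symmetry; apply: H => //; exact: ltnW.
move=> /eqP; rewrite eq_sym eqn_mod_dvd; last exact: leq_mul.
rewrite -mulnBl Gauss_dvdl; last by rewrite coprime_sym.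
case: (posnP (b - a)) => [|h]; first lia.
move/(dvdn_leq h); lia.
Qed.

Lemma mkseq_cons T (f : nat -> T) L : mkseq f L.+1 = f 0 :: mkseq (fun j => f j.+1) L.
Proof.
apply: (@eq_from_nth _ (f 0)); first by rewrite size_mkseq [size (_ :: _)]/= size_mkseq.
rewrite size_mkseq => i iL; rewrite nth_mkseq //.
by case: i iL => [|i] //= iL; rewrite nth_mkseq.
Qed.

Lemma lexle_refl u : lexle u u.
Proof. by elim: u => //= x u IH; rewrite eqxx. Qed.

Lemma lexle_trans : transitive lexle.
Proof.
move=> v u w; elim: u v w => [|x u IH] [|y v] [|z w] //=.
by case: x; case: y; case: z => //=; apply: IH.
Qed.

Lemma lexle_antisym : antisymmetric lexle.
Proof.
move=> u v; elim: u v => [|x u IH] [|y v] //=.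
by case: x; case: y => //= /IH ->.
Qed.

Lemma lexle_total : total lexle.
Proof.
move=> u v; elim: u v => [|x u IH] [|y v] //=; rewrite eq_sym.
case: (y =P x) => // nxy.
by case: x y nxy => [] [].
Qed.

Lemma mech_mono n q p y y' o L : p + q = n -> 0 < p -> y < y' ->
  (y + o * q) %/ n = (y' + o * q) %/ n ->
  lexle (mkseq (fun j => mech n q p y (o + j)) L)
        (mkseq (fun j => mech n q p y' (o + j)) L).
Proof.
move=> e p0 yy'; elim: L o => [|L IH] o eq0 //.
rewrite !mkseq_cons /= !addn0.
set A := y + o * q; set A' := y' + o * q.
have hA := divn_eq A n; have hA' := divn_eq A' n.
have hmod : A' %% n = A %% n + (y' - y).
  move: hA hA'; rewrite -/A -/A' eq0.
  move: (A' %/ n * n) => t; rewrite /A /A'; lia.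
have H1 : (A + q) %/ n = (A' + q) %/ n -> lexle (mkseq (fun j => mech n q p y (o + j.+1)) L)
        (mkseq (fun j => mech n q p y' (o + j.+1)) L).
  move=> h; have := IH o.+1; rewrite /=.
  have E1 : mkseq (fun j => mech n q p y (o.+1 + j)) L = mkseq (fun j => mech n q p y (o + j.+1)) L.
    by apply: eq_mkseq => j; rewrite addSnnS.
  have E2 : mkseq (fun j => mech n q p y' (o.+1 + j)) L = mkseq (fun j => mech n q p y' (o + j.+1)) L.
    by apply: eq_mkseq => j; rewrite addSnnS.
  rewrite E1 E2; apply; rewrite !mulSn.
  have -> : y + (q + o * q) = A + q by rewrite /A; lia.
  have -> : y' + (q + o * q) = A' + q by rewrite /A'; lia.
  exact: h.
rewrite /mech -/A -/A'.
case: ifP => hx.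
  apply: H1; rewrite !(divstep _ e p0) eq0.
  by rewrite -/A' (eqP hx).
move: hx; rewrite hmod.
have imp : p <= A %% n -> p <= A %% n + (y' - y) by move=> hh; exact: leq_trans hh (leq_addr _ _).
case: (p <= A %% n) imp; case: (p <= A %% n + (y' - y)) => //=; by move=> ->.
Qed.

Lemma lower_mech p q i : 0 < p -> 0 < q -> i < p + q ->
  nth false (lower_christoffel p q) i = mech (p + q) q p 0 i.
Proof.
move=> p0 q0 ilt; rewrite /lower_christoffel nth_mkseq // /mech add0n.
have n0 : 0 < p + q by lia.
set n := p + q in n0 *.
set a := (i * q) %% n.
have an : a < n by exact: ltn_pmod.
have -> : (i.+1 * q) %% n = (q + a) %% n by rewrite modnDmr mulSn.
case: (ltnP a p) => h.
  rewrite modn_small; last by rewrite /n; lia.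
  have -> : a < q + a by lia.
  by move: h; case: (leqP p a).
have -> : q + a = n + (a - p) by rewrite /n; lia.
rewrite modnDl modn_small; last by lia.
by have -> : (a < a - p) = false by apply/idP; lia.
Qed.

Lemma modn_val v z n : v %% n = z %% n -> v < n + n -> z < n -> v = z \/ v = n + z.
Proof.
move=> e vl zl; case: (ltnP v n) => h.
  by left; move: e; rewrite !modn_small.
right; move: e; have -> : v = n + (v - n) by lia.
rewrite modnDl !modn_small //; lia.
Qed.

Lemma rev_mech p q i : 0 < p -> 0 < q -> i < p + q ->
  mech (p + q) q p 0 (p + q - i.+1) = mech (p + q) q p (p + q - 1) i.
Proof.
move=> p0 q0 ilt; rewrite /mech add0n.
have n0 : 0 < p + q by lia.
set n := p + q in n0 ilt *.
set z := (i.+1 * q) %% n.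
have zn : z < n by exact: ltn_pmod.
set y := ((n - i.+1) * q) %% n.
have yn : y < n by exact: ltn_pmod.
set x := (n - 1 + i * q) %% n.
have xn : x < n by exact: ltn_pmod.
have ey : (y + z) %% n = 0 %% n.
  rewrite /y /z modnDml modnDmr -mulnDl.
  have -> : n - i.+1 + i.+1 = n by lia.
  by rewrite modnMr mod0n.
have ex : (x + (q + 1)) %% n = z %% n.
  rewrite /x /z modnDml modn_mod.
  have -> : n - 1 + i * q + (q + 1) = n + i.+1 * q by rewrite mulSn; lia.
  by rewrite modnDl.
have nn : n = p + q by [].
clearbody x y z n.
have [hy|hy] := modn_val ey ltac:(lia) n0;
have [hx|hx] := modn_val ex ltac:(lia) zn.
all: apply/idP/idP; lia.
Qed.

Lemma nth_rot' T x0 (s : seq T) r j : r < size s -> j < size s ->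
  nth x0 (rot r s) j = nth x0 s ((r + j) %% size s).
Proof.
move=> rs js; rewrite /rot nth_cat size_drop.
case: (ltnP j (size s - r)) => h.
  by rewrite nth_drop modn_small //; lia.
rewrite nth_take; last by lia.
have -> : r + j = size s + (j - (size s - r)) by lia.
by rewrite modnDl modn_small //; lia.
Qed.

Lemma mech_mod n q p y j : mech n q p y (j %% n) = mech n q p y j.
Proof. by rewrite /mech -modnDmr modnMml modnDmr. Qed.

Lemma mech_shift n q p y r j : mech n q p y (r + j) = mech n q p (y + r * q) j.
Proof. by rewrite /mech mulnDl addnA. Qed.

Lemma rep w c : christoffel c -> conjugate w c -> exists Y,
  [/\ 0 < cnt_a w, cnt_a w < size w, coprime (cnt_a w) (size w - cnt_a w) &
   forall j, j < size w -> nth false w j = mech (size w) (size w - cnt_a w) (cnt_a w) Y j].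
Proof.
move=> [p0 [q0 [pp qp cop hc]]] [r hw].
have szc : size c = p0 + q0 by case: hc => ->; rewrite ?size_rev size_mkseq.
have [Y0 [Y0n hY0]] : exists Y0, Y0 < p0 + q0 /\
    forall j, j < p0 + q0 -> nth false c j = mech (p0 + q0) q0 p0 Y0 j.
  case: hc => ->.
    by exists 0; split; [lia | move=> j hj; exact: lower_mech].
  exists (p0 + q0 - 1); split; first lia.
  move=> j hj; rewrite nth_rev size_mkseq //.
  by rewrite lower_mech //; [exact: rev_mech | lia].
have cm : c = mkseq (fun j => mech (p0 + q0) q0 p0 Y0 (0 + j)) (p0 + q0).
  apply: (@eq_from_nth _ false); first by rewrite size_mkseq.
  by rewrite szc => j hj; rewrite nth_mkseq // hY0.
have cb : count id c = q0.
  rewrite cm count_mech // add0n mul0n addn0 (divn_small Y0n) subn0.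
  by rewrite addnC mulnC divnMDl ?divn_small //; lia.
have ca : cnt_a c = p0.
  have := count_predC id c; rewrite cb szc /cnt_a.
  have -> : count (predC id) c = count negb c by [].
  lia.
have [cw sw] : cnt_a w = p0 /\ size w = p0 + q0.
  have pr : perm_eq (rot r c) c by rewrite perm_rot.
  by rewrite hw /cnt_a (permP pr) -/(cnt_a c) size_rot.
rewrite cw sw; have -> : p0 + q0 - p0 = q0 by lia.
case: (ltnP r (p0 + q0)) => hr; last first.
  exists Y0; split => //; [lia|].
  by move=> j hj; rewrite hw rot_oversize ?szc // hY0.
exists (Y0 + r * q0); split => //; [lia|].
move=> j hj; rewrite hw nth_rot' ?szc //.
rewrite hY0; last by apply: ltn_pmod; lia.
by rewrite mech_mod mech_shift.
Qed.

Lemma mech_mody n q p y j : mech n q p (y %% n) j = mech n q p y j.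
Proof. by rewrite /mech modnDml. Qed.

Definition fw n q p m y : word := mkseq (fun j => mech n q p y j) m.

Lemma circ_perm w n q p Y m : p + q = n -> 0 < p -> coprime q n -> size w = n -> m <= n ->
  (forall j, j < n -> nth false w j = mech n q p Y j) ->
  perm_eq (circ_factors w m) [seq fw n q p m y | y <- iota 0 n].
Proof.
move=> e p0 cq sw mn hw.
have n0 : 0 < n by lia.
have -> : circ_factors w m = [seq fw n q p m y | y <- [seq (Y + i * q) %% n | i <- iota 0 n]].
  rewrite /circ_factors -map_comp sw; apply/eq_in_map => i; rewrite mem_iota /= => hi.
  apply: (@eq_from_nth _ false).
    by rewrite size_takel ?size_rot ?sw // /fw size_mkseq.
  rewrite size_takel ?size_rot ?sw // => j hj.
  rewrite nth_take // nth_rot' ?sw //; last lia.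
  rewrite hw; last exact: ltn_pmod.
  by rewrite /fw nth_mkseq // mech_mody mech_mod mech_shift.
apply: perm_map; apply: uniq_perm; last first.
- have U : uniq [seq (Y + i * q) %% n | i <- iota 0 n].
    rewrite map_inj_in_uniq ?iota_uniq // => a b; rewrite !mem_iota /= => ha hb h.
    apply: (mod_cancel cq); [lia|lia|].
    by apply/eqP; rewrite -(eqn_modDl Y); apply/eqP.
  apply: (uniq_min_size U _ _).2.
    by move=> x /mapP[i _ ->]; rewrite mem_iota /=; exact: ltn_pmod.
  by rewrite size_map.
- exact: iota_uniq.
- rewrite map_inj_in_uniq ?iota_uniq // => a b; rewrite !mem_iota /= => ha hb h.
  apply: (mod_cancel cq); [lia|lia|].
  by apply/eqP; rewrite -(eqn_modDl Y); apply/eqP.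
Qed.

Lemma take_mkseq T (g : nat -> T) a b : take a (mkseq g (a + b)) = mkseq g a.
Proof.
apply: (@eq_from_nth _ (g 0)); first by rewrite size_takel ?size_mkseq // leq_addr.
move=> i; rewrite size_takel ?size_mkseq ?leq_addr // => hi.
by rewrite nth_take // !nth_mkseq //; lia.
Qed.

Lemma drop_mkseq T (g : nat -> T) a b : drop a (mkseq g (a + b)) = mkseq (fun j => g (a + j)) b.
Proof.
apply: (@eq_from_nth _ (g 0)); first by rewrite size_drop !size_mkseq; lia.
move=> i; rewrite size_drop size_mkseq => hi.
by rewrite nth_drop !nth_mkseq //; lia.
Qed.

Definition SS (P : seq nat) l := sumn (take l P).
Definition FF n q y s := (y + s * q) %/ n.

Lemma hp_gen n q p y P o : p + q = n -> 0 < p ->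
  height_profile P (mkseq (fun j => mech n q p y (o + j)) (sumn P)) =
  [seq FF n q y (o + SS P l.+1) - FF n q y (o + SS P l) | l <- iota 0 (size P)].
Proof.
move=> e p0; elim: P o => [|p1 P IH] o //=.
rewrite /height_profile /= take_mkseq drop_mkseq.
have -> : [seq cnt_b x | x <- reshape P (mkseq (fun j => mech n q p y (o + (p1 + j))) (sumn P))]
   = height_profile P (mkseq (fun j => mech n q p y ((o + p1) + j)) (sumn P)).
  by rewrite /height_profile; congr (map _ (reshape _ _)); apply: eq_mkseq => j; rewrite addnA.
rewrite IH /cnt_b count_mech // /SS /FF /= !addn0.
congr (_ :: _).
  by rewrite take0 /= addn0.
have -> : iota 1 (size P) = [seq 1 + i | i <- iota 0 (size P)] by rewrite -iotaDl.
rewrite -map_comp; apply: eq_map => l /=.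
by rewrite add1n /= !addnA.
Qed.

Lemma diffs_inj (a b : nat -> nat) k :
  (forall l, l < k -> a l <= a l.+1) -> (forall l, l < k -> b l <= b l.+1) -> a 0 = b 0 ->
  ([seq a l.+1 - a l | l <- iota 0 k] = [seq b l.+1 - b l | l <- iota 0 k]) <->
  (forall l, l <= k -> a l = b l).
Proof.
move=> ma mb e0; split.
  move=> E; elim=> [|l IH] hl //.
  have := congr1 (nth 0 ^~ l) E; rewrite !(nth_map 0) ?size_iota // nth_iota //= => h.
  rewrite add0n in h; have := ma l hl; have := mb l hl; have := IH (ltnW hl); lia.
move=> H; apply/eq_in_map => l; rewrite mem_iota /= => hl.
by rewrite !H //; lia.
Qed.

Lemma size_le_sumn (s : seq nat) : all (fun x => 0 < x) s -> size s <= sumn s.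
Proof. by elim: s => //= x s IH /andP[h /IH]; lia. Qed.

Lemma sumn_take_le (s : seq nat) l : sumn (take l s) <= sumn s.
Proof. by rewrite -{2}(cat_take_drop l s) sumn_cat leq_addr. Qed.

Lemma SS_mono (s : seq nat) l : SS s l <= SS s l.+1.
Proof.
rewrite /SS; case: (ltnP l (size s)) => h.
  by rewrite (take_nth 0 h) sumn_rcons leq_addr.
by rewrite !take_oversize //; lia.
Qed.

Lemma SS_pos (s : seq nat) l : all (fun x => 0 < x) s -> 0 < l <= size s -> 0 < SS s l.
Proof.
move=> ha hl; apply: leq_trans (_ : l <= _); first by lia.
have := size_le_sumn (s := take l s).
rewrite size_takel; last by lia.
apply; apply/allP => x /mem_take hx; exact: (allP ha).
Qed.

Lemma sum_mods n q p s : p + q = n -> 0 < p -> coprime q n -> 0 < s < n ->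
  (s * p) %% n + (s * q) %% n = n.
Proof.
move=> e p0 cq hs; have n0 : 0 < n by lia.
have E : ((s * p) %% n + (s * q) %% n) %% n = 0 %% n.
  rewrite modnDml modnDmr -mulnDr e.
  by rewrite modnMl mod0n.
have := ltn_pmod (s * p) n0; have := ltn_pmod (s * q) n0 => h1 h2.
have [H|H] := modn_val E ltac:(lia) n0; last lia.
exfalso; have h0 : (s * q) %% n = 0 by lia.
have : n %| s * q by rewrite /dvdn h0.
rewrite Gauss_dvdl; last by rewrite coprime_sym.
move/(dvdn_leq (ltac:(lia) : 0 < s)); lia.
Qed.

Lemma FF_thr n q p y s : p + q = n -> 0 < p -> coprime q n -> y < n -> 0 < s < n ->
  FF n q y s = (s * q) %/ n + ((s * p) %% n <= y).
Proof.
move=> e p0 cq yn hs; have n0 : 0 < n by lia.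
have sm := sum_mods e p0 cq hs.
have := ltn_pmod (s * q) n0 => h1.
rewrite /FF {1}(divn_eq (s * q) n) addnC -addnA divnMDl //.
rewrite (@div_small2 ((s * q) %% n + y)) //; last lia.
by have -> : (n <= (s * q) %% n + y) = ((s * p) %% n <= y) by apply/idP/idP; lia.
Qed.

Lemma b2n_eq (b1 b2 : bool) : (nat_of_bool b1 == nat_of_bool b2) = (b1 == b2).
Proof. by case: b1; case: b2. Qed.

Lemma FF_eqP n q p y y' s : p + q = n -> 0 < p -> coprime q n -> y < n -> y' < n -> 0 < s < n ->
  (FF n q y s == FF n q y' s) = (((s * p) %% n <= y) == ((s * p) %% n <= y')).
Proof.
move=> e p0 cq yn y'n hs.
by rewrite !(FF_thr e p0 cq) // eqn_add2l b2n_eq.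
Qed.

Lemma hp_eq n q p P y y' : p + q = n -> 0 < p -> coprime q n ->
  all (fun x => 0 < x) P -> sumn P < n -> y < n -> y' < n ->
  (height_profile P (fw n q p (sumn P) y) == height_profile P (fw n q p (sumn P) y'))
  = all (fun r => (r <= y) == (r <= y')) (residues P p n).
Proof.
move=> e p0 cq hP hm yn y'n.
have n0 : 0 < n by lia.
have E y0 : height_profile P (mkseq (fun j => mech n q p y0 j) (sumn P)) =
  [seq FF n q y0 (0 + SS P l.+1) - FF n q y0 (0 + SS P l) | l <- iota 0 (size P)]
  := hp_gen y0 P 0 e p0.
have mono y0 l : l < size P -> FF n q y0 (0 + SS P l) <= FF n q y0 (0 + SS P l.+1).
  by move=> _; rewrite /FF; apply: leq_div2r; rewrite leq_add2l leq_mul2r SS_mono orbT.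
have e0 : FF n q y (0 + SS P 0) = FF n q y' (0 + SS P 0).
  by rewrite /FF /SS take0 /= !addn0 !divn_small.
have key l : 0 < l <= size P ->
  (FF n q y (0 + SS P l) == FF n q y' (0 + SS P l)) =
  (((sumn (take l P) * p) %% n <= y) == ((sumn (take l P) * p) %% n <= y')).
  move=> hl; rewrite add0n (FF_eqP e p0 cq) //.
  rewrite SS_pos //=; apply: leq_ltn_trans (sumn_take_le _ _) hm.
rewrite /fw !E /residues all_map.
apply/idP/idP.
- move/eqP/diffs_inj => H; have {}H := H (mono y) (mono y') e0.
  apply/allP => l; rewrite mem_iota /= => hl.
  case: l hl => [|l] hl; first by rewrite take0 /= mod0n.
  by rewrite -key ?H //; lia.
- move/allP => H; apply/eqP/diffs_inj => //; [exact: mono | exact: mono|].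
  move=> l hl; case: l hl => [|l] hl; first exact: e0.
  apply/eqP; rewrite key; last lia.
  by apply: H; rewrite mem_iota; lia.
Qed.

Lemma count_interval a b n : a <= b <= n ->
  count (fun y => a <= y < b) (iota 0 n) = b - a.
Proof.
move=> hab.
have -> : n = a + ((b - a) + (n - b)) by lia.
rewrite iotaD iotaD !count_cat.
rewrite (@eq_in_count _ _ pred0 (iota 0 a)); last first.
  by move=> y; rewrite mem_iota /= => h; apply/idP/idP; lia.
rewrite (@eq_in_count _ _ predT (iota (0 + a) (b - a))); last first.
  by move=> y; rewrite mem_iota /= => h; apply/idP/idP; lia.
rewrite (@eq_in_count _ _ pred0 (iota (0 + a + (b - a)) (n - b))); last first.
  by move=> y; rewrite mem_iota /= => h; apply/idP/idP; lia.
by rewrite !count_pred0 count_predT size_iota add0n addn0.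
Qed.

Lemma cover (g : nat -> nat) y N : g 0 <= y -> y < g N -> exists2 l, l < N & g l <= y < g l.+1.
Proof.
elim: N => [|N IH] h0 hN; first lia.
case: (leqP (g N) y) => h.
  by exists N => //; apply/andP.
have [l hl hl'] := IH h0 h; exists l => //; lia.
Qed.

Lemma SS_lt (P : seq nat) l l' : all (fun x => 0 < x) P -> l < l' <= size P -> SS P l < SS P l'.
Proof.
move=> hP; elim: l' => [|l' IH] /andP[h1 h2]; first lia.
have step : SS P l' < SS P l'.+1.
  rewrite /SS (take_nth 0); last lia.
  rewrite sumn_rcons -{1}(addn0 (sumn _)) ltn_add2l.
  by apply: (allP hP); apply: mem_nth.
case: (ltnP l l') => h.
  apply: ltn_trans step; apply: IH; apply/andP; split => //; lia.
have -> : l = l' by lia.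
exact: step.
Qed.

Lemma sorted_iota_rel (r : rel nat) a N :
  (forall i, a <= i -> i.+1 < a + N -> r i i.+1) -> sorted r (iota a N).
Proof.
elim: N a => [|N IH] a H //=.
case: N IH H => [|N] IH H //=.
apply/andP; split; first by apply: H; lia.
have := IH a.+1; rewrite /=; apply => i hi hi'; apply: H; lia.
Qed.

Theorem mainTheorem3 (w : word) (c : word) (k m : nat) (P : seq nat) :
  christoffel c -> conjugate w c -> 1 < size w ->
  1 <= k -> k <= m -> m < size w ->
  ordered_partition P m k ->
  uniq (residues P (cnt_a w) (size w)) /\
  [seq multiplicity w P h | h <- ordered_varieties w P]
    = Pi_partition P (cnt_a w) (size w).
Proof.
move=> hc hcj hn hk hkm hmn /and3P[/eqP sP hP /eqP sumP].
have [Y [p0 pn cop hw]] := rep hc hcj.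
have [n sw] : {n | size w = n} by exists (size w).
have [p ep] : {p | cnt_a w = p} by exists (cnt_a w).
rewrite sw ep in hn hmn pn cop hw p0 *.
subst k m.
set q := n - p in cop hw.
have e : p + q = n by rewrite /q; lia.
clearbody q.
have n0 : 0 < n by lia.
have cq : coprime q n by rewrite -e -coprime_modr modnDr coprime_modr coprime_sym.
have cp : coprime p n by rewrite -e -coprime_modr modnDl coprime_modr.
set f := fw n q p (sumn P).
set hp := fun y => height_profile P (f y).
have CP : perm_eq (circ_factors w (sumn P)) [seq f y | y <- iota 0 n]
  := circ_perm e p0 cq sw (ltnW hmn) hw.
set res := residues P p n.
have SSn l : SS P l < n by apply: leq_ltn_trans (sumn_take_le _ _) hmn.
have Ures : uniq res.
  rewrite /res /residues map_inj_in_uniq ?iota_uniq // => a b; rewrite !mem_iota /= => ha hb h.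
  have eSS := mod_cancel cp (SSn a) (SSn b) h.
  case: (ltngtP a b) => // hab.
  - by have := SS_lt hP (ltac:(apply/andP; split; lia) : a < b <= size P); rewrite eSS ltnn.
  - by have := SS_lt hP (ltac:(apply/andP; split; lia) : b < a <= size P); rewrite eSS ltnn.
split => //.
set R := sort leq res.
set T := fun i => nth 0 (rcons R n) i.
have szR : size R = (size P).+1 by rewrite /R size_sort /res /residues size_map size_iota.
have sR : sorted leq R := sort_sorted leq_total res.
have UR : uniq R by rewrite sort_uniq.
have sRl : sorted ltn R by rewrite ltn_sorted_uniq_leq UR sR.
have pR : perm_eq R res by rewrite perm_sort.
have memR r : (r \in R) = (r \in res) by rewrite mem_sort.
have resn r : r \in res -> r < n by move=> /mapP[l _ ->]; exact: ltn_pmod.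
have TR i : i <= size P -> T i = nth 0 R i by move=> hi; rewrite /T nth_rcons szR ltnS hi.
have Tin i : i <= size P -> T i \in res.
  by move=> hi; rewrite TR // -memR mem_nth // szR.
have TN : T (size P).+1 = n by rewrite /T nth_rcons szR ltnn eqxx.
have T0 : T 0 = 0.
  have r0 : 0 \in R by rewrite memR; apply/mapP; exists 0; rewrite ?mem_iota // take0 /= mod0n.
  rewrite TR //; have := nth_index 0 r0 => hi.
  have := sorted_leq_nth leq_trans leqnn 0 sR => /(_ 0 (index 0 R)).
  rewrite !inE index_mem r0 szR => /(_ isT isT (leq0n _)); rewrite hi; lia.
have Tlt i j : i < j <= (size P).+1 -> T i < T j.
  move=> /andP[hij hj]; case: (ltnP j (size P).+1) => hj'.
    have hj2 : j <= size P by rewrite -ltnS.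
    have hi2 : i <= size P by apply: ltnW; exact: leq_trans hij hj2.
    rewrite !TR //.
    by apply: (sorted_ltn_nth ltn_trans 0 sRl) => //; rewrite inE szR; lia.
  have -> : j = (size P).+1 by lia.
  by rewrite TN; apply: resn; apply: Tin; lia.
have Tle i j : i <= j <= (size P).+1 -> T i <= T j.
  move=> /andP[hij hj]; case: (ltngtP i j) => h.
  - by apply: ltnW; apply: Tlt; rewrite h hj.
  - by move: hij; rewrite leqNgt h.
  - by rewrite h.
have Tn l : l <= size P -> T l < n by move=> hl; rewrite -TN; apply: Tlt; lia.
have interval l y : l <= size P -> y < n ->
    all (fun r => (r <= y) == (r <= T l)) res = (T l <= y < T l.+1).
  move=> hl hy; rewrite -(perm_all _ pR); apply/(all_nthP 0)/idP.
  - move=> H; have := H l; rewrite szR -TR // leqnn eqb_id => /(_ ltac:(lia)) h1.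
    rewrite h1 /=; case: (ltnP l (size P)) => hl'.
      have := H l.+1; rewrite szR -TR // => /(_ ltac:(lia)).
      have -> : (T l.+1 <= T l) = false by apply/negbTE; rewrite -ltnNge; apply: Tlt; lia.
      by rewrite eqbF_neg -ltnNge.
    have el : l = size P by lia.
    by rewrite el TN in h1 *; rewrite hy.
  - move=> /andP[h1 h2] i; rewrite szR ltnS => hi; rewrite -TR //.
    case: (leqP i l) => hil.
      have hTi : T i <= T l by apply: Tle; lia.
      by rewrite hTi (leq_trans hTi h1).
    have hTi : T l.+1 <= T i by apply: Tle; lia.
    have hTl : T l < T i by apply: Tlt; lia.
    have -> : (T i <= y) = false by apply/negbTE; rewrite -ltnNge; exact: leq_trans h2 hTi.
    by have -> : (T i <= T l) = false by apply/negbTE; rewrite -ltnNge.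
have same l y : l <= size P -> y < n -> (hp y == hp (T l)) = (T l <= y < T l.+1).
  by move=> hl hy; rewrite /hp /f hp_eq // ?Tn // interval.
have mult h : multiplicity w P h = count (fun y => hp y == h) (iota 0 n).
  by rewrite /multiplicity /variety_elems size_filter (permP CP) count_map.
have multT l : l <= size P -> multiplicity w P (hp (T l)) = T l.+1 - T l.
  move=> hl; rewrite mult (@eq_in_count _ _ (fun y => T l <= y < T l.+1)).
    by apply: count_interval; rewrite Tle ?TN -?TN ?Tle //; lia.
  by move=> y; rewrite mem_iota /= => hy; apply: same.
have fmono y y' : y <= y' < n -> lexle (f y) (f y').
  move=> /andP[h1 h2]; case: (ltngtP y y') => h.
  - have := @mech_mono n q p y y' 0 (sumn P) e p0 h.
    by rewrite !mul0n !addn0 !divn_small //; [apply; by [] | exact: ltn_trans h h2].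
  - by move: h1; rewrite leqNgt h.
  - by rewrite h lexle_refl.
have leT l : l <= size P -> least_elem w P (hp (T l)) = f (T l).
  move=> hl; rewrite /least_elem.
  set V := variety_elems w P (hp (T l)).
  have memV u : (u \in V) = (height_profile P u == hp (T l)) && (u \in [seq f y | y <- iota 0 n]).
    by rewrite /V /variety_elems mem_filter (perm_mem CP).
  have fTV : f (T l) \in V by rewrite memV eqxx /=; apply: map_f; rewrite mem_iota /= Tn.
  have sV : sorted lexle (sort lexle V) := sort_sorted lexle_total V.
  case E: (sort lexle V) sV => [|z s] sV.
    by have := fTV; rewrite -(mem_sort lexle) E.
  have zV : z \in V by rewrite -(mem_sort lexle) E mem_head.
  have low : lexle z (f (T l)).
    move: fTV; rewrite -(mem_sort lexle) E inE => /predU1P[<-|hs]; first exact: lexle_refl.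
    by have := order_path_min lexle_trans sV => /allP; apply.
  move: zV; rewrite memV => /andP[hz /mapP[y]]; rewrite mem_iota /= => hy ez.
  rewrite ez in hz low *; rewrite -/(hp y) same // in hz.
  apply: lexle_antisym; rewrite low /=; apply: fmono.
  by case/andP: hz => -> /=.
set L := [seq hp (T l) | l <- iota 0 (size P).+1].
have memvar h : (h \in varieties w P) = (h \in L).
  rewrite /varieties mem_undup (perm_mem (perm_map _ CP)) -map_comp.
  apply/mapP/mapP => -[x]; rewrite mem_iota /=.
  - move=> hy ->; rename x into y.
    have [l hl /andP[h1 h2]] := @cover T y (size P).+1 ltac:(by rewrite T0) ltac:(by rewrite TN).
    exists l; first by rewrite -[0 :: _]/(iota 0 (size P).+1) mem_iota.
    by apply/eqP; rewrite same // h1 h2; lia.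
  - move=> hl ->; rename x into l; exists (T l); last by [].
    by rewrite mem_iota /= Tn //; lia.
have UL : uniq L.
  rewrite map_inj_in_uniq ?iota_uniq // => i j; rewrite !mem_iota /= => hi hj /eqP h.
  have hi' : i <= size P by rewrite -ltnS.
  have hj' : j <= size P by rewrite -ltnS.
  rewrite same ?Tn // in h.
  case/andP: h => h1 h2; case: (ltngtP i j) => // hij.
  - by have := Tlt i j ltac:(lia); lia.
  - by have := Tle j.+1 i ltac:(lia); lia.
have permV : perm_eq (varieties w P) L := uniq_perm (undup_uniq _) UL memvar.
have ord : ordered_varieties w P = L.
  rewrite /ordered_varieties; symmetry; apply: (@sorted_eq_in _ (fun h1 h2 => lexle (least_elem w P h1) (least_elem w P h2))).
  - by move=> y x z _ _ _; exact: lexle_trans.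
  - move=> h1 h2 /mapP[i]; rewrite mem_iota /= => hi -> /mapP[j]; rewrite mem_iota /= => hj ->.
    rewrite !leT ?(ltnSE hi) ?(ltnSE hj) //.
    by move/lexle_antisym; rewrite /hp => ->.
  - rewrite sorted_map; apply: sorted_iota_rel => i _ hi /=.
    have hi1 : i.+1 <= size P by rewrite -ltnS.
    rewrite !leT ?hi1 ?(ltnW hi1) //.
    by apply: fmono; rewrite Tle ?Tn //=; lia.
  - by apply: sort_sorted => h1 h2; exact: lexle_total.
  - by rewrite perm_sym perm_sort.
rewrite ord /L /Pi_partition -map_comp; apply/eq_in_map => l; rewrite mem_iota /= => hl.
by rewrite multT //; lia.
Qed.
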